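(* Let $u(t)$ be a (twice continuously differentiable in $t$) vector of grid values on the reference grid satisfying the semidiscrete scheme $$J a\,\ddot{u} = \mathbb{D}_{jk}(\alpha_{ijik} b)\,u + \mathrm{SAT},$$ where $\mathrm{SAT}=\mathrm{SAT}(t)$ is an arbitrary vector of grid values (summation over $i,j,k$). Then $$\frac{dE}{dt} = \langle \dot u,\, b D_{\hat n} u\rangle_{\Gamma',h} + \dot u^T H\,\mathrm{SAT}.$$ In particular, with the Neumann penalty $$\mathrm{SAT} = -H^{-1}\sum_{f\in F} e_f\,\gamma\,H_f\, b\,\big(e_f^T D_{\hat n} u - 0\big)$$ (all coefficients evaluated on face $f$, and $D_{\hat n}$ formed with the normal of face $f$), one has $\frac{dE}{dt}=0$, and $E\ge 0$ for all $u,\dot u$.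
   Context: Summation convention: repeated subscript indices are summed from $1$ to $d$ unless ''no sum'' is stated. Every grid function (coefficient) is identified with the diagonal matrix of its grid values. One-dimensional SBP operators: on an equidistant grid of $N$ points with spacing $h$, let $e_\ell=(1,0,\dots,0)^T$, $e_r=(0,\dots,0,1)^T$, $H_\xi = h\,\mathrm{diag}(w_1,\dots,w_s,1,\dots,1,w_s,\dots,w_1)$ with all $w_i>0$, and $\theta_H:=w_1$. $D_\xi$ is an $N\times N$ matrix with $H_\xi D_\xi + D_\xi^T H_\xi = -e_\ell e_\ell^T + e_r e_r^T$; $\hat D_\xi$ is another $N\times N$ matrix and $\Delta D_\xi = D_\xi-\hat D_\xi$. For each grid function $c$, $D_{\xi\xi}(c)$ and $R_{\xi\xi}(c)$ are $N\times N$ matrices with $H_\xi D_{\xi\xi}(c) = -D_\xi^T H_\xi c D_\xi - R_{\xi\xi}(c) - e_\ell c_\ell e_\ell^T \hat D_\xi + e_r c_r e_r^T\hat D_\xi$ ($c_\ell,c_r$ the endpoint values of $c$), where $R_{\xi\xi}(c)$ depends linearly on $c$ and is symmetric positive semidefinite whenever $c\ge 0$ entrywise. Multi-dimensional operators: the reference domain $\Omega=[0,1]^d$ carries the tensor-product grid with $N$ points and spacing $h$ in each direction. $D_i$, $\hat D_i$, $H_i$ are the Kronecker products $I\otimes\cdots\otimes X\otimes\cdots\otimes I$ with $X=D_\xi,\hat D_\xi,H_\xi$ respectively in the $i$th factor; $\Delta D_i=D_i-\hat D_i$; $H=H_\xi\otimes\cdots\otimes H_\xi$ ($d$ factors). For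 a grid function $c$, $D_{ii}(c)$ (resp. $\widetilde R_{ii}(c)$) applies $D_{\xi\xi}$ (resp. $R_{\xi\xi}$), with $c$ restricted to the line, along every grid line in direction $i$, and $R_{ii}(c)=H_i^{-1}H\widetilde R_{ii}(c)$. Define $\mathbb D_{jk}(c)=D_{jj}(c)$ if $j=k$ and $\mathbb D_{jk}(c)=D_j c D_k$ if $j\ne k$. Faces: $\Gamma_i^-=\{\xi_i=0\}$, $\Gamma_i^+=\{\xi_i=1\}$, $F$ the set of all $2d$ faces. For $f\in F$, $e_f$ is the restriction matrix such that $e_f^Tu$ is the vector of values of $u$ at the grid points of $f$; for $f=\Gamma_i^\pm$, $H_f$ is the Kronecker product of $d-1$ copies of $H_\xi$ (direction $i$ omitted), and $\nu=(\nu_1,\dots,\nu_d)$ is the outward unit normal of $f$ in reference coordinates ($\nu_i=\pm1$, other components $0$). Discrete forms: $\langle u,v\rangle_{\Omega,h}=u^THv$, $\langle u,v\rangle_{\Gamma,h}=\sum_{f\in F}(e_f^Tu)^TH_f(e_f^Tv)$, where in the term for face $f$ every occurrence of $\nu$ or of face-dependent quantities refers to face $f$ (also at edge and corner points); $\|u\|^2_{\Omega,h}=\langle u,u\rangle_{\Omega,h}$, $\|u\|^2_{\Gamma,h}=\langle u,u\rangle_{\Gamma,h}$. Geometry and coefficients: a smooth bijection $\vec x(\vec\xi)$ from $\Omega$ onto the physical domain $\Omega'$; $\mathcal J_{ij}=\partial x_j/\partial\xi_i$, $J=\det\mathcal J>0$, $\mathcal K_{ij}=\partial\xi_j/\partial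 x_i$; $\gamma>0$ on $\partial\Omega$ is defined by $d\Gamma'=\gamma\,d\Gamma$ (surface element ratio); $a>0$, $b>0$ are coefficient functions; all are evaluated at grid points and regarded as diagonal matrices. $\alpha_{ijkl}=\mathcal K_{ij}J\mathcal K_{kl}$. Physical forms: $\langle u,v\rangle_{\Omega',h}=\langle u,Jv\rangle_{\Omega,h}$, $\langle u,v\rangle_{\Gamma',h}=\langle u,\gamma v\rangle_{\Gamma,h}$, with associated squared (semi)norms. $D_{x_i}=\mathcal K_{ij}D_j$. The discrete normal derivative (used at boundary points, face by face) is $D_{\hat n}=\nu_j\frac{\alpha_{ijik}}{\gamma}D_k-\sum_k\nu_k\frac{\alpha_{ikik}}{\gamma}\Delta D_k$. Let $\eta_k=\alpha_{ikik}b$ (sum over $i$, no sum over $k$). The discrete energy is $$E=\tfrac12\|\sqrt a\,\dot u\|^2_{\Omega',h}+\tfrac12\sum_i\|\sqrt b\,D_{x_i}u\|^2_{\Omega',h}+\tfrac12\sum_k u^TR_{kk}(\eta_k)u.$$ All coefficients are time-independent. *)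

(* Defs.v *)
From Stdlib Require Import Reals Lra Lia.
Open Scope R_scope.

Fixpoint rsum (n : nat) (f : nat -> R) : R :=
  match n with O => 0 | S n' => rsum n' f + f n' end.
Fixpoint rprod (n : nat) (f : nat -> R) : R :=
  match n with O => 1 | S n' => rprod n' f * f n' end.

Definition indic (b : bool) : R := if b then 1 else 0.

(** Vectors (grid functions) and matrices, indexed by nat; only the
    entries with indices below the relevant size are meaningful. *)
Definition vec := nat -> R.
Definition mat := nat -> nat -> R.

Definition mv (n : nat) (A : mat) (v : vec) : vec :=
  fun m => rsum n (fun m' => A m m' * v m').
Definition dot (n : nat) (u v : vec) : R := rsum n (fun m => u m * v m).

(** Diagonal entry k (0-based) of H_xi = h diag(w1..ws,1..1,ws..w1);
    the weight w_{i} is [w (i-1)]. *)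
Definition hweight (N s : nat) (h : R) (w : nat -> R) (k : nat) : R :=
  h * (if Nat.ltb k s then w k
       else if Nat.leb (N - s) k then w (N - 1 - k)%nat else 1).

(** * Tensor-product grid on [0,1]^d: N^d points, linear index m,
    coordinate i of point m is the i-th base-N digit of m. *)
Definition npts (N d : nat) : nat := Nat.pow N d.
Definition coord (N i m : nat) : nat := Nat.modulo (Nat.div m (Nat.pow N i)) N.
(** the grid point obtained from m by setting coordinate i to k *)
Definition setcoord (N i m k : nat) : nat :=
  (m - coord N i m * Nat.pow N i + k * Nat.pow N i)%nat.

(** [samel N d i m m'] = 1 iff m, m' lie on the same grid line in direction i *)
Definition samel (N d i m m' : nat) : R :=
  rprod d (fun l => if Nat.eqb l i then 1
                    else indic (Nat.eqb (coord N l m) (coord N l m'))).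

(** Kronecker product I ⊗ ... ⊗ X ⊗ ... ⊗ I (X in the i-th factor) *)
Definition kronI (N d i : nat) (X : mat) : mat :=
  fun m m' => X (coord N i m) (coord N i m') * samel N d i m m'.

(** H = H_xi ⊗ ... ⊗ H_xi (diagonal) *)
Definition Hdiag (N d : nat) (hw : nat -> R) (m : nat) : R :=
  rprod d (fun l => hw (coord N l m)).
Definition Hmat (N d : nat) (hw : nat -> R) : mat :=
  fun m m' => if Nat.eqb m m' then Hdiag N d hw m else 0.

(** restriction of a grid function c to the grid line in direction i through m *)
Definition lineof (N i : nat) (c : vec) (m : nat) : vec :=
  fun k => c (setcoord N i m k).

(** D_ii(c): D_xixi applied along every grid line in direction i *)
Definition Dii (N d : nat) (Dxx : vec -> mat) (i : nat) (c : vec) : mat :=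
  fun m m' => Dxx (lineof N i c m) (coord N i m) (coord N i m') * samel N d i m m'.
(** tilde R_ii(c) and R_ii(c) = H_i^{-1} H tilde R_ii(c) *)
Definition Rtii (N d : nat) (Rxx : vec -> mat) (i : nat) (c : vec) : mat :=
  fun m m' => Rxx (lineof N i c m) (coord N i m) (coord N i m') * samel N d i m m'.
Definition Rii (N d : nat) (hw : nat -> R) (Rxx : vec -> mat) (i : nat) (c : vec) : mat :=
  fun m m' => / hw (coord N i m) * Hdiag N d hw m * Rtii N d Rxx i c m m'.

Definition Dk (N d : nat) (D : mat) (k : nat) : mat := kronI N d k D.

Definition DDapp (N d : nat) (D : mat) (Dxx : vec -> mat) (j k : nat) (c u : vec) : vec :=
  if Nat.eqb j k then mv (npts N d) (Dii N d Dxx j c) u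
  else mv (npts N d) (Dk N d D j) (fun m => c m * mv (npts N d) (Dk N d D k) u m).

(** * Geometry: K i j = K_ij = d xi_j / d x_i (grid function), J (grid function) *)
Definition alpha (K : nat -> nat -> vec) (J : vec) (i j k l : nat) : vec :=
  fun m => K i j m * J m * K k l m.

Definition schemeRHS (N d : nat) (D : mat) (Dxx : vec -> mat)
  (K : nat -> nat -> vec) (J b : vec) (u : vec) : vec :=
  fun m => rsum d (fun i => rsum d (fun j => rsum d (fun k =>
     DDapp N d D Dxx j k (fun p => alpha K J i j i k p * b p) u m))).

Definition Dx (N d : nat) (D : mat) (K : nat -> nat -> vec) (i : nat) (u : vec) : vec :=
  fun m => rsum d (fun j => K i j m * mv (npts N d) (Dk N d D j) u m).

Definition eta (d : nat) (K : nat -> nat -> vec) (J b : vec) (k : nat) : vec :=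
  fun m => rsum d (fun i => alpha K J i k i k m) * b m.

Definition ipO (N d : nat) (hw : nat -> R) (u v : vec) : R :=
  dot (npts N d) u (mv (npts N d) (Hmat N d hw) v).
Definition ipOp (N d : nat) (hw : nat -> R) (J : vec) (u v : vec) : R :=
  ipO N d hw u (fun m => J m * v m).

Definition energy (N d : nat) (hw : nat -> R) (D : mat) (Rxx : vec -> mat)
  (K : nat -> nat -> vec) (J a b : vec) (u ud : vec) : R :=
  / 2 * ipOp N d hw J (fun m => sqrt (a m) * ud m) (fun m => sqrt (a m) * ud m)
  + / 2 * rsum d (fun i => ipOp N d hw J (fun m => sqrt (b m) * Dx N d D K i u m)
                                         (fun m => sqrt (b m) * Dx N d D K i u m))
  + / 2 * rsum d (fun k => dot (npts N d) u
                             (mv (npts N d) (Rii N d hw Rxx k (eta d K J b k)) u)).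

(** * Faces: face (i, false) = Gamma_i^- = {xi_i = 0}, (i, true) = Gamma_i^+ *)
Definition onface (N i : nat) (side : bool) (m : nat) : bool :=
  Nat.eqb (coord N i m) (if side then (N - 1)%nat else 0%nat).
Definition Hface (N d : nat) (hw : nat -> R) (i m : nat) : R :=
  rprod d (fun l => if Nat.eqb l i then 1 else hw (coord N l m)).
(** outward unit normal component nu_j of face (i, side) *)
Definition nu (i : nat) (side : bool) (j : nat) : R :=
  if Nat.eqb j i then (if side then 1 else -1) else 0.

(** <u, v>_{Gamma,h} where v may depend on the face *)
Definition ipG (N d : nat) (hw : nat -> R) (u : vec) (v : nat -> bool -> vec) : R :=
  rsum d (fun i =>
    rsum (npts N d) (fun m => indic (onface N i false m) * u m * Hface N d hw i m * v i false m)
  + rsum (npts N d) (fun m => indic (onface N i true m) * u m * Hface N d hw i m * v i true m)).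
Definition ipGp (N d : nat) (hw : nat -> R) (gamma : nat -> bool -> vec)
  (u : vec) (v : nat -> bool -> vec) : R :=
  ipG N d hw u (fun i s m => gamma i s m * v i s m).

Definition Dn (N d : nat) (D hatD : mat) (K : nat -> nat -> vec) (J : vec)
  (gamma : nat -> bool -> vec) (i : nat) (side : bool) (u : vec) : vec :=
  fun m =>
    rsum d (fun l => rsum d (fun j => rsum d (fun k =>
       nu i side j * (alpha K J l j l k m / gamma i side m)
       * mv (npts N d) (Dk N d D k) u m)))
  - rsum d (fun k =>
       nu i side k * (rsum d (fun l => alpha K J l k l k m) / gamma i side m)
       * mv (npts N d) (Dk N d (fun p q => D p q - hatD p q) k) u m).

Definition SATneu (N d : nat) (hw : nat -> R) (D hatD : mat) (K : nat -> nat -> vec)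
  (J b : vec) (gamma : nat -> bool -> vec) (u : vec) : vec :=
  fun m => - (/ Hdiag N d hw m) * rsum d (fun i =>
      indic (onface N i false m) * gamma i false m * Hface N d hw i m * b m
        * (Dn N d D hatD K J gamma i false u m - 0)
    + indic (onface N i true m) * gamma i true m * Hface N d hw i m * b m
        * (Dn N d D hatD K J gamma i true u m - 0)).

(* Main.v *)
Require Import Defs.
From Stdlib Require Import Reals Lra Lia FunctionalExtensionality.
Open Scope R_scope.
Set Warnings "-deprecated".


Lemma rsum_ext n f g : (forall i, (i < n)%nat -> f i = g i) -> rsum n f = rsum n g.
Proof. induction n; simpl; intros H; auto. rewrite IHn by (intros; apply H; lia). rewrite H by lia. auto. Qed.

Lemma rsum_plus n f g : rsum n (fun i => f i + g i) = rsum n f + rsum n g.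
Proof. induction n; simpl; [lra|]. rewrite IHn. lra. Qed.

Lemma rsum_minus n f g : rsum n (fun i => f i - g i) = rsum n f - rsum n g.
Proof. induction n; simpl; [lra|]. rewrite IHn. lra. Qed.

Lemma rsum_scal n c f : rsum n (fun i => c * f i) = c * rsum n f.
Proof. induction n; simpl; [lra|]. rewrite IHn. lra. Qed.

Lemma rsum_scal_r n c f : rsum n (fun i => f i * c) = rsum n f * c.
Proof. induction n; simpl; [lra|]. rewrite IHn. lra. Qed.

Lemma rsum_zero n f : (forall i, (i < n)%nat -> f i = 0) -> rsum n f = 0.
Proof. induction n; simpl; intros H; auto. rewrite IHn by (intros; apply H; lia). rewrite H by lia. lra. Qed.

Lemma rsum_swap n m f : rsum n (fun i => rsum m (fun j => f i j)) = rsum m (fun j => rsum n (fun i => f i j)).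
Proof. induction n; simpl. { symmetry. apply rsum_zero. auto. }
  rewrite IHn. rewrite <- rsum_plus. auto. Qed.

Lemma rsum_mult n m f g : rsum n f * rsum m g = rsum n (fun i => rsum m (fun j => f i * g j)).
Proof. rewrite <- rsum_scal_r. apply rsum_ext. intros. rewrite <- rsum_scal. auto. Qed.

Lemma rsum_nonneg n f : (forall i, (i < n)%nat -> 0 <= f i) -> 0 <= rsum n f.
Proof. induction n; simpl; intros H; [lra|]. assert (0 <= rsum n f) by (apply IHn; intros; apply H; lia). specialize (H n ltac:(lia)). lra.
Qed.

Lemma rsum_indic n x f : (x < n)%nat -> rsum n (fun i => indic (Nat.eqb i x) * f i) = f x.
Proof. induction n; simpl; intros H; [lia|]. destruct (Nat.eq_dec x n).
  - subst. rewrite rsum_zero. rewrite Nat.eqb_refl. unfold indic; lra.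
    intros i Hi. destruct (Nat.eqb_spec i n); [lia|]. unfold indic; lra.
  - rewrite IHn by lia. destruct (Nat.eqb_spec n x); [lia|]. unfold indic; lra.
Qed.

Lemma rsum_indic' n x f : (x < n)%nat -> rsum n (fun i => indic (Nat.eqb x i) * f i) = f x.
Proof. intros. rewrite <- (rsum_indic n x f H). apply rsum_ext. intros. rewrite Nat.eqb_sym. auto. Qed.

Lemma rsum_if n x A B : (x < n)%nat ->
  rsum n (fun k => if Nat.eqb x k then B k else A k) = rsum n A - A x + B x.
Proof. intros Hx. transitivity (rsum n (fun k => A k + indic (Nat.eqb x k) * (B k - A k))).
  - apply rsum_ext. intros. destruct (Nat.eqb x i); unfold indic; ring.
  - rewrite rsum_plus, rsum_indic' by auto. ring.
Qed.

Lemma rsum_ifz n x A : (x < n)%nat ->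
  rsum n (fun k => if Nat.eqb k x then A k else 0) = A x.
Proof. intros Hx. rewrite <- (rsum_indic n x A Hx). apply rsum_ext. intros. destruct (Nat.eqb i x); unfold indic; ring. Qed.

Lemma rprod_ext n f g : (forall i, (i < n)%nat -> f i = g i) -> rprod n f = rprod n g.
Proof. induction n; simpl; intros H; auto. rewrite IHn by (intros; apply H; lia). rewrite H by lia. auto. Qed.

Lemma rprod_pos n f : (forall i, (i < n)%nat -> 0 < f i) -> 0 < rprod n f.
Proof. induction n; simpl; intros H; [lra|]. apply Rmult_lt_0_compat; [apply IHn; intros; apply H; lia| apply H; lia]. Qed.

Lemma rprod_split n i f : (i < n)%nat -> rprod n f = f i * rprod n (fun l => if Nat.eqb l i then 1 else f l).
Proof. induction n; simpl; intros H; [lia|]. destruct (Nat.eq_dec i n).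
  - subst. rewrite Nat.eqb_refl. rewrite (rprod_ext n (fun l => if Nat.eqb l n then 1 else f l) f). ring.
    intros l Hl. destruct (Nat.eqb_spec l n); [lia|auto].
  - rewrite IHn by lia. destruct (Nat.eqb_spec n i); [lia|]. ring.
Qed.

Lemma rprod_01 n f : (forall l, (l < n)%nat -> f l = 1 \/ f l = 0) ->
  (rprod n f = 1 /\ forall l, (l < n)%nat -> f l = 1) \/ (rprod n f = 0 /\ exists l, (l < n)%nat /\ f l = 0).
Proof. induction n; simpl; intros H.
  - left; split; auto; intros; lia.
  - assert (IH := IHn ltac:(intros; apply H; lia)).
    destruct IH as [[H1 H2]|[H1 [l [Hl H3]]]].
    + destruct (H n ltac:(lia)) as [E|E].
      * left. split. rewrite H1, E; ring. intros l Hl. destruct (Nat.eq_dec l n); [subst; auto| apply H2; lia].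
      * right. split. rewrite E; ring. exists n; split; auto.
    + right. split. rewrite H1; ring. exists l; split; auto; lia.
Qed.

Lemma coord0 N m : coord N 0 m = Nat.modulo m N.
Proof. unfold coord. rewrite Nat.pow_0_r, Nat.div_1_r. auto. Qed.

Lemma coordS N l m : N <> 0%nat -> coord N (S l) m = coord N l (Nat.div m N).
Proof. intros. unfold coord. rewrite Nat.pow_succ_r'. rewrite Nat.Div0.div_div; auto. Qed.

Lemma coord_lt N l m : N <> 0%nat -> (coord N l m < N)%nat.
Proof. intros. unfold coord. apply Nat.mod_upper_bound; auto. Qed.

Lemma coord_le N j x : N <> 0%nat -> (coord N j x * Nat.pow N j <= x)%nat.
Proof. intros. unfold coord. assert (Nat.pow N j <> 0%nat) by (apply Nat.pow_nonzero; auto).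
  pose proof (Nat.mod_le (x / N ^ j) N H).
  pose proof (Nat.mul_div_le x (N^j) H0).
  assert ((x / N ^ j) mod N * N ^ j <= x / N ^ j * N ^ j)%nat by (apply Nat.mul_le_mono_r; auto).
  rewrite Nat.mul_comm in H2. lia. Qed.

Lemma mod_lin N q r : (r < N)%nat -> Nat.modulo (N * q + r) N = r.
Proof. intros. rewrite Nat.mul_comm. rewrite Nat.add_comm. rewrite Nat.mod_add by lia. apply Nat.mod_small; auto. Qed.

Lemma div_lin N q r : (r < N)%nat -> Nat.div (N * q + r) N = q.
Proof. intros. rewrite Nat.mul_comm. rewrite Nat.add_comm. rewrite Nat.div_add by lia. rewrite Nat.div_small; auto. Qed.

Lemma setcoord0 N m r : N <> 0%nat -> setcoord N 0 m r = (N * (m / N) + r)%nat.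
Proof. intros. unfold setcoord. rewrite coord0. simpl. pose proof (Nat.div_mod_eq m N). lia. Qed.

Lemma setcoordS N j m r : N <> 0%nat -> setcoord N (S j) m r = (N * setcoord N j (m / N) r + Nat.modulo m N)%nat.
Proof. intros. unfold setcoord. rewrite coordS by auto. rewrite Nat.pow_succ_r'.
  pose proof (coord_le N j (m / N) H). pose proof (Nat.div_mod_eq m N).
  set (c := coord N j (m/N)) in *. set (P := Nat.pow N j) in *. set (q := (m / N)%nat) in *.
  set (z := (m mod N)%nat) in *. rewrite H1 at 1.
  rewrite Nat.mul_add_distr_l, Nat.mul_sub_distr_l. 
  assert (N * (c * P) <= N * q)%nat by (apply Nat.mul_le_mono_l; auto).
  replace (c * (N * P))%nat with (N * (c * P))%nat by ring.
  replace (r * (N * P))%nat with (N * (r * P))%nat by ring. lia. Qed.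

Lemma coord_set_same N j m r : N <> 0%nat -> (r < N)%nat -> coord N j (setcoord N j m r) = r.
Proof. intros HN Hr. revert m. induction j; intros m.
  - rewrite setcoord0, coord0 by auto. apply mod_lin; auto.
  - rewrite setcoordS, coordS by auto. rewrite div_lin by (apply Nat.mod_upper_bound; auto). auto.
Qed.

Lemma coord_set_other N j l m r : N <> 0%nat -> (r < N)%nat -> l <> j -> coord N l (setcoord N j m r) = coord N l m.
Proof. intros HN Hr. revert m l. induction j; intros m l Hl.
  - destruct l; [lia|]. rewrite setcoord0 by auto. rewrite !coordS by auto. rewrite div_lin; auto.
  - rewrite setcoordS by auto. destruct l.
    + rewrite !coord0. apply mod_lin. apply Nat.mod_upper_bound; auto.
    + rewrite !coordS by auto. rewrite div_lin by (apply Nat.mod_upper_bound; auto). apply IHj. lia.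
Qed.

Lemma setcoord_lt N d j m r : N <> 0%nat -> (r < N)%nat -> (j < d)%nat -> (m < Nat.pow N d)%nat ->
  (setcoord N j m r < Nat.pow N d)%nat.
Proof. intros HN Hr. revert d m. induction j; intros d m Hj Hm.
  - destruct d; [lia|]. rewrite setcoord0 by auto. rewrite Nat.pow_succ_r' in *.
    assert ((m / N)%nat < N ^ d)%nat by (apply Nat.div_lt_upper_bound; auto). nia.
  - destruct d; [lia|]. rewrite setcoordS by auto. rewrite Nat.pow_succ_r' in *.
    assert ((m / N)%nat < N ^ d)%nat by (apply Nat.div_lt_upper_bound; auto).
    specialize (IHj d (m/N)%nat ltac:(lia) H). pose proof (Nat.mod_upper_bound m N HN). nia.
Qed.

Lemma digits_unique N d m m' : N <> 0%nat -> (m < Nat.pow N d)%nat -> (m' < Nat.pow N d)%nat ->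
  (forall l, (l < d)%nat -> coord N l m = coord N l m') -> m = m'.
Proof. intros HN. revert m m'. induction d; intros m m' Hm Hm' H.
  - simpl in *. lia.
  - rewrite Nat.pow_succ_r' in *. pose proof (Nat.div_mod_eq m N). pose proof (Nat.div_mod_eq m' N).
    assert (m mod N = m' mod N) by (rewrite <- !coord0; apply H; lia).
    assert (m / N = m' / N)%nat.
    { apply IHd. apply Nat.div_lt_upper_bound; auto. apply Nat.div_lt_upper_bound; auto.
      intros l Hl. rewrite <- !coordS by auto. apply H. lia. }
    lia.
Qed.

Lemma setcoord_base N j m k : N <> 0%nat -> setcoord N j m k = (setcoord N j m 0 + k * Nat.pow N j)%nat.
Proof. intros. unfold setcoord. pose proof (coord_le N j m H). lia. Qed.


Lemma rprod_one n : rprod n (fun _ => 1) = 1.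
Proof. induction n; simpl; auto. rewrite IHn; ring. Qed.

Lemma samel_cases N d i m m' :
  (samel N d i m m' = 1 /\ forall l, (l < d)%nat -> l <> i -> coord N l m = coord N l m') \/
  (samel N d i m m' = 0 /\ exists l, (l < d)%nat /\ l <> i /\ coord N l m <> coord N l m').
Proof. unfold samel.
  destruct (rprod_01 d (fun l => if Nat.eqb l i then 1 else indic (Nat.eqb (coord N l m) (coord N l m'))))
    as [[H1 H2]|[H1 [l [Hl H3]]]].
  - intros l Hl. destruct (Nat.eqb l i); auto. unfold indic; destruct (Nat.eqb _ _); auto.
  - left. split; auto. intros l Hl Hli. specialize (H2 l Hl). cbv beta in H2.
    destruct (Nat.eqb_spec l i); [lia|]. unfold indic in H2.
    destruct (Nat.eqb_spec (coord N l m) (coord N l m')); auto. lra.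
  - right. split; auto. exists l. cbv beta in H3. destruct (Nat.eqb_spec l i). lra.
    unfold indic in H3. destruct (Nat.eqb_spec (coord N l m) (coord N l m')). lra. auto.
Qed.

Lemma samel_all N d i m m' : (forall l, (l < d)%nat -> l <> i -> coord N l m = coord N l m') ->
  samel N d i m m' = 1.
Proof. intros H. unfold samel. transitivity (rprod d (fun _ => 1)); [|apply rprod_one]. apply rprod_ext. intros l Hl.
  destruct (Nat.eqb_spec l i); auto. rewrite H by auto. rewrite Nat.eqb_refl. reflexivity. Qed.

Lemma samel_sym N d i m m' : samel N d i m m' = samel N d i m' m.
Proof. unfold samel. apply rprod_ext. intros l _. destruct (Nat.eqb l i); [auto| rewrite Nat.eqb_sym; auto]. Qed.

Lemma samel_coords N d i m1 m2 m' : (forall l, (l < d)%nat -> l <> i -> coord N l m1 = coord N l m2) ->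
  samel N d i m1 m' = samel N d i m2 m'.
Proof. intros H. unfold samel. apply rprod_ext. intros l Hl.
  destruct (Nat.eqb_spec l i); [auto|]. rewrite H by auto. auto. Qed.

Lemma Hface_coords N d hw i m1 m2 : (forall l, (l < d)%nat -> l <> i -> coord N l m1 = coord N l m2) ->
  Hface N d hw i m1 = Hface N d hw i m2.
Proof. intros H. unfold Hface. apply rprod_ext. intros l Hl.
  destruct (Nat.eqb_spec l i); [auto|]. rewrite H by auto. auto. Qed.

Lemma Hdiag_split N d hw i m : (i < d)%nat -> Hdiag N d hw m = hw (coord N i m) * Hface N d hw i m.
Proof. intros H. unfold Hdiag, Hface. exact (rprod_split d i (fun l => hw (coord N l m)) H). Qed.

Section Grid.
Variables N d : nat.
Hypothesis HN0 : N <> 0%nat.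

Lemma setcoord_self i m : (i < d)%nat -> (m < Nat.pow N d)%nat -> setcoord N i m (coord N i m) = m.
Proof. intros Hi Hm. apply (digits_unique N d); auto.
  apply setcoord_lt; auto. apply coord_lt; auto.
  intros l Hl. destruct (Nat.eq_dec l i). subst. apply coord_set_same; auto. apply coord_lt; auto.
  apply coord_set_other; auto. apply coord_lt; auto. Qed.

Lemma setcoord_eq i m m' r : (i < d)%nat -> (m < Nat.pow N d)%nat -> (m' < Nat.pow N d)%nat ->
  (forall l, (l < d)%nat -> l <> i -> coord N l m = coord N l m') ->
  setcoord N i m r = setcoord N i m' r.
Proof. intros Hi Hm Hm' H. rewrite (setcoord_base N i m), (setcoord_base N i m') by auto.
  f_equal. apply (digits_unique N d); auto. apply setcoord_lt; auto; lia. apply setcoord_lt; auto; lia.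
  intros l Hl. destruct (Nat.eq_dec l i). subst. rewrite !coord_set_same by (auto; lia). auto.
  rewrite !coord_set_other by (auto; lia). auto. Qed.

Lemma samel_set i m m' r : (r < N)%nat -> samel N d i (setcoord N i m r) m' = samel N d i m m'.
Proof. intros Hr. apply samel_coords. intros. apply coord_set_other; auto. Qed.

Lemma Hface_set hw i m r : (r < N)%nat -> Hface N d hw i (setcoord N i m r) = Hface N d hw i m.
Proof. intros Hr. apply Hface_coords. intros. apply coord_set_other; auto. Qed.

Lemma samel_char i m m'' : (i < d)%nat -> (m < Nat.pow N d)%nat -> (m'' < Nat.pow N d)%nat ->
  samel N d i m'' m = rsum N (fun r => indic (Nat.eqb (setcoord N i m r) m'')).
Proof. intros Hi Hm Hm''. destruct (samel_cases N d i m'' m) as [[H1 H2]|[H1 [l [Hl [Hli H3]]]]].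
  - rewrite H1. transitivity (rsum N (fun r => indic (Nat.eqb r (coord N i m'')) * 1)).
    rewrite (rsum_indic N (coord N i m'') (fun _ => 1)) by (apply coord_lt; auto). auto.
    apply rsum_ext. intros r Hr. rewrite Rmult_1_r. f_equal.
    destruct (Nat.eqb_spec (setcoord N i m r) m''); destruct (Nat.eqb_spec r (coord N i m'')); auto.
    + exfalso. apply n. subst. rewrite coord_set_same; auto.
    + exfalso. apply n. subst. rewrite <- (setcoord_self i m'') at 2 by auto.
      apply setcoord_eq; auto. intros. symmetry; auto.
  - rewrite H1. symmetry. apply rsum_zero. intros r Hr.
    destruct (Nat.eqb_spec (setcoord N i m r) m''); auto. exfalso. apply H3. subst.
    rewrite coord_set_other; auto.
Qed.

Lemma linesum i m F : (i < d)%nat -> (m < Nat.pow N d)%nat ->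
  rsum (Nat.pow N d) (fun m'' => samel N d i m'' m * F m'') = rsum N (fun r => F (setcoord N i m r)).
Proof. intros Hi Hm.
  transitivity (rsum (Nat.pow N d) (fun m'' => rsum N (fun r => indic (Nat.eqb (setcoord N i m r) m'') * F m''))).
  - apply rsum_ext. intros m'' Hm''. rewrite samel_char by auto. rewrite <- rsum_scal_r. auto.
  - rewrite rsum_swap. apply rsum_ext. intros r Hr. apply rsum_indic'. apply setcoord_lt; auto.
Qed.

Lemma group_sum i Phi : (i < d)%nat ->
  rsum (Nat.pow N d) Phi =
  rsum (Nat.pow N d) (fun m => indic (Nat.eqb (coord N i m) 0) * rsum N (fun r => Phi (setcoord N i m r))).
Proof. intros Hi. symmetry.
  transitivity (rsum (Nat.pow N d) (fun m => rsum (Nat.pow N d) (fun m'' => indic (Nat.eqb (coord N i m) 0) * samel N d i m'' m * Phi m''))).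
  - apply rsum_ext. intros m Hm. rewrite <- (linesum i m Phi) by auto. rewrite <- rsum_scal.
    apply rsum_ext. intros. ring.
  - rewrite rsum_swap. apply rsum_ext. intros m'' Hm''.
    transitivity (rsum (Nat.pow N d) (fun m => samel N d i m m'' * indic (Nat.eqb (coord N i m) 0)) * Phi m'').
    + rewrite <- rsum_scal_r. apply rsum_ext. intros. rewrite samel_sym. ring.
    + rewrite linesum by auto. 
      rewrite (rsum_ext N _ (fun r => indic (Nat.eqb r 0) * 1)).
      rewrite (rsum_indic N 0 (fun _ => 1)) by lia. ring.
      intros r Hr. rewrite coord_set_same by auto. ring.
Qed.

End Grid.


Section Ops.
Variables (N d : nat) (hw : nat -> R) (D hatD : mat) (Dxx Rxx : vec -> mat).
Hypothesis HN2 : (2 <= N)%nat.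
Hypothesis Hhw : forall k, (k < N)%nat -> 0 < hw k.
Hypothesis HSBP : forall p q, (p < N)%nat -> (q < N)%nat ->
     hw p * D p q + D q p * hw q
     = - indic (Nat.eqb p 0 && Nat.eqb q 0)
       + indic (Nat.eqb p (N - 1) && Nat.eqb q (N - 1)).
Hypothesis HDxx : forall (c : vec) p q, (p < N)%nat -> (q < N)%nat ->
     hw p * Dxx c p q
     = - rsum N (fun r => D r p * hw r * c r * D r q)
       - Rxx c p q
       - indic (Nat.eqb p 0) * c 0%nat * hatD 0%nat q
       + indic (Nat.eqb p (N - 1)) * c (N - 1)%nat * hatD (N - 1)%nat q.

Local Notation M := (Nat.pow N d).
Lemma HN0 : N <> 0%nat. Proof. lia. Qed.
Hint Resolve HN0 : core.

Lemma clt l m : (coord N l m < N)%nat. Proof. apply coord_lt. lia. Qed.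
Hint Resolve clt : core.

Lemma Hdiag_pos m : 0 < Hdiag N d hw m.
Proof. unfold Hdiag. apply rprod_pos. intros. apply Hhw. auto. Qed.

Lemma Hface_pos i m : 0 < Hface N d hw i m.
Proof. unfold Hface. apply rprod_pos. intros. destruct (Nat.eqb i0 i). lra. apply Hhw. auto. Qed.

Lemma mvH v m : (m < M)%nat -> mv M (Hmat N d hw) v m = Hdiag N d hw m * v m.
Proof. intros Hm. unfold mv, Hmat. rewrite <- (rsum_indic' M m (fun m' => Hdiag N d hw m * v m')) by auto.
  apply rsum_ext. intros. destruct (Nat.eqb_spec m i); subst; unfold indic; ring. Qed.

Definition Bj j (x y : vec) : R :=
  rsum M (fun m => (- indic (onface N j false m) + indic (onface N j true m)) * Hface N d hw j m * x m * y m).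

Lemma PW j m m' : (j < d)%nat -> (m < M)%nat -> (m' < M)%nat ->
  Hdiag N d hw m * Dk N d D j m m' + Hdiag N d hw m' * Dk N d D j m' m
  = indic (Nat.eqb m m') * Hface N d hw j m * (- indic (onface N j false m) + indic (onface N j true m)).
Proof. intros Hj Hm Hm'. unfold Dk, kronI. rewrite (samel_sym N d j m' m).
  destruct (samel_cases N d j m m') as [[H1 H2]|[H1 [l [Hl [Hli H3]]]]].
  - rewrite H1. rewrite (Hdiag_split N d hw j m), (Hdiag_split N d hw j m') by auto.
    rewrite (Hface_coords N d hw j m' m) by (intros; symmetry; auto).
    set (p := coord N j m). set (q := coord N j m').
    transitivity (Hface N d hw j m * (hw p * D p q + D q p * hw q)). ring.
    rewrite HSBP by (unfold p, q; auto).
    unfold onface. fold p.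
    destruct (Nat.eqb_spec m m').
    + subst m'. assert (q = p) by auto. rewrite H.
      destruct (Nat.eqb p 0); destruct (Nat.eqb p (N-1)); simpl; unfold indic; ring.
    + assert (p <> q). { intro E. apply n. apply (digits_unique N d); auto.
        intros l Hl. destruct (Nat.eq_dec l j). subst. auto. apply H2; auto. }
      destruct (Nat.eqb_spec p 0); destruct (Nat.eqb_spec q 0); try lia;
      destruct (Nat.eqb_spec p (N-1)); destruct (Nat.eqb_spec q (N-1)); try lia; simpl; unfold indic; ring.
  - rewrite H1. destruct (Nat.eqb_spec m m'). subst. lia. unfold indic. ring.
Qed.

Lemma SBPsum j x w : (j < d)%nat ->
  rsum M (fun m => x m * Hdiag N d hw m * mv M (Dk N d D j) w m)
  = - rsum M (fun m => Hdiag N d hw m * mv M (Dk N d D j) x m * w m) + Bj j x w.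
Proof. intros Hj.
  assert (E1 : rsum M (fun m => x m * Hdiag N d hw m * mv M (Dk N d D j) w m)
     = rsum M (fun m => rsum M (fun m' => x m * w m' * (Hdiag N d hw m * Dk N d D j m m')))).
  { apply rsum_ext. intros. unfold mv. rewrite <- rsum_scal. apply rsum_ext. intros. ring. }
  assert (E2 : rsum M (fun m => Hdiag N d hw m * mv M (Dk N d D j) x m * w m)
     = rsum M (fun m => rsum M (fun m' => x m * w m' * (Hdiag N d hw m' * Dk N d D j m' m)))).
  { rewrite rsum_swap. apply rsum_ext. intros. unfold mv. rewrite <- rsum_scal, <- rsum_scal_r.
    apply rsum_ext. intros. ring. }
  rewrite E1, E2. apply Rplus_eq_reg_r with (rsum M (fun m => rsum M (fun m' => x m * w m' * (Hdiag N d hw m' * Dk N d D j m' m)))).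
  rewrite <- rsum_plus. ring_simplify.
  unfold Bj. apply rsum_ext. intros m Hm.
  rewrite <- rsum_plus.
  transitivity (rsum M (fun m' => indic (Nat.eqb m m') * (x m * w m' * Hface N d hw j m * (- indic (onface N j false m) + indic (onface N j true m))))).
  - apply rsum_ext. intros m' Hm'. rewrite <- Rmult_plus_distr_l. rewrite PW by auto. ring.
  - rewrite rsum_indic' by auto. ring.
Qed.


Lemma rsum_opp n f : rsum n (fun i => - f i) = - rsum n f.
Proof. induction n; simpl; [ring|]. rewrite IHn. ring. Qed.

Lemma Rii_eq j c m m' : (j < d)%nat ->
  Rii N d hw Rxx j c m m' = Hface N d hw j m * Rxx (lineof N j c m) (coord N j m) (coord N j m') * samel N d j m m'.
Proof. intros Hj. unfold Rii, Rtii. rewrite (Hdiag_split N d hw j m) by auto.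
  assert (hw (coord N j m) <> 0) by (apply Rgt_not_eq, Hhw; auto). field. auto. Qed.

Lemma P1sum j c v u : (j < d)%nat ->
  rsum M (fun m'' => Hdiag N d hw m'' * c m'' * mv M (Dk N d D j) v m'' * mv M (Dk N d D j) u m'')
  = rsum M (fun m => rsum M (fun m' => v m * u m' * (Hface N d hw j m * samel N d j m m' *
      rsum N (fun r => D r (coord N j m) * hw r * lineof N j c m r * D r (coord N j m'))))).
Proof. intros Hj.
  transitivity (rsum M (fun m'' => rsum M (fun m => rsum M (fun m' => v m * u m' *
     (samel N d j m'' m * (Hdiag N d hw m'' * c m'' * D (coord N j m'') (coord N j m)
        * D (coord N j m'') (coord N j m') * samel N d j m'' m')))))).
  { apply rsum_ext. intros m'' Hm''. unfold mv, Dk, kronI.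
    rewrite Rmult_assoc. rewrite rsum_mult. rewrite <- rsum_scal.
    apply rsum_ext. intros. rewrite <- rsum_scal. apply rsum_ext. intros. ring. }
  rewrite rsum_swap. apply rsum_ext. intros m Hm. rewrite rsum_swap. apply rsum_ext. intros m' Hm'.
  rewrite rsum_scal. f_equal.
  rewrite (linesum N d HN0 j m (fun m'' => Hdiag N d hw m'' * c m'' * D (coord N j m'') (coord N j m)
        * D (coord N j m'') (coord N j m') * samel N d j m'' m')) by auto.
  rewrite <- rsum_scal. apply rsum_ext. intros r Hr.
  rewrite (Hdiag_split N d hw j) by auto. rewrite coord_set_same by auto.
  rewrite Hface_set, samel_set by auto. unfold lineof. ring.
Qed.

Lemma set0_self j (c : vec) m : (j < d)%nat -> (m < M)%nat -> coord N j m = 0%nat -> c (setcoord N j m 0) = c m.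
Proof. intros. rewrite <- H1. rewrite (setcoord_self N d); auto. Qed.

Lemma setN_self j (c : vec) m : (j < d)%nat -> (m < M)%nat -> coord N j m = (N - 1)%nat -> c (setcoord N j m (N-1)) = c m.
Proof. intros. rewrite <- H1. rewrite (setcoord_self N d); auto. Qed.

Lemma DiiSum j c v u : (j < d)%nat ->
  rsum M (fun m => v m * Hdiag N d hw m * mv M (Dii N d Dxx j c) u m)
  = - rsum M (fun m => Hdiag N d hw m * c m * mv M (Dk N d D j) v m * mv M (Dk N d D j) u m)
    - rsum M (fun m => v m * mv M (Rii N d hw Rxx j c) u m)
    + Bj j v (fun m => c m * mv M (Dk N d hatD j) u m).
Proof. intros Hj. rewrite P1sum by auto. unfold Bj.
  set (Y := fun m => (- indic (onface N j false m) + indic (onface N j true m)) * Hface N d hw j m * v m * c m).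
  transitivity (rsum M (fun m => - rsum M (fun m' => v m * u m' * (Hface N d hw j m * samel N d j m m' *
      rsum N (fun r => D r (coord N j m) * hw r * lineof N j c m r * D r (coord N j m'))))
      - v m * mv M (Rii N d hw Rxx j c) u m + Y m * mv M (Dk N d hatD j) u m)).
  2:{ rewrite rsum_plus, rsum_minus, rsum_opp. f_equal. apply rsum_ext. intros. unfold Y. ring. }
  apply rsum_ext. intros m Hm. unfold mv.
  transitivity (rsum M (fun m' => - (v m * u m' * (Hface N d hw j m * samel N d j m m' *
      rsum N (fun r => D r (coord N j m) * hw r * lineof N j c m r * D r (coord N j m'))))
      - v m * (Rii N d hw Rxx j c m m' * u m') + Y m * (Dk N d hatD j m m' * u m'))).
  2:{ rewrite rsum_plus, rsum_minus, rsum_opp, !rsum_scal. reflexivity. }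
  rewrite <- rsum_scal.
  apply rsum_ext. intros m' Hm'. unfold Dii, Dk, kronI, Y.
  rewrite (Hdiag_split N d hw j m) by auto. rewrite Rii_eq by auto.
  transitivity (v m * u m' * Hface N d hw j m * samel N d j m m' *
     (hw (coord N j m) * Dxx (lineof N j c m) (coord N j m) (coord N j m'))). ring.
  rewrite HDxx by auto.
  unfold onface, lineof.
  destruct (Nat.eqb_spec (coord N j m) 0) as [E0|E0];
  [rewrite (set0_self j c m Hj Hm E0) |];
  (destruct (Nat.eqb_spec (coord N j m) (N-1)) as [E1|E1];
  [rewrite (setN_self j c m Hj Hm E1) |]); try lia; unfold lineof; try rewrite <- E0; try rewrite <- E1;
  unfold indic; ring.
Qed.

End Ops.


Section Static.
Variables (N d : nat) (hw : nat -> R) (D hatD : mat) (Dxx Rxx : vec -> mat)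
  (K : nat -> nat -> vec) (J b : vec) (gamma : nat -> bool -> vec).
Hypothesis HN2 : (2 <= N)%nat.
Hypothesis Hhw : forall k, (k < N)%nat -> 0 < hw k.
Hypothesis HSBP : forall p q, (p < N)%nat -> (q < N)%nat ->
     hw p * D p q + D q p * hw q
     = - indic (Nat.eqb p 0 && Nat.eqb q 0)
       + indic (Nat.eqb p (N - 1) && Nat.eqb q (N - 1)).
Hypothesis HDxx : forall (c : vec) p q, (p < N)%nat -> (q < N)%nat ->
     hw p * Dxx c p q
     = - rsum N (fun r => D r p * hw r * c r * D r q)
       - Rxx c p q
       - indic (Nat.eqb p 0) * c 0%nat * hatD 0%nat q
       + indic (Nat.eqb p (N - 1)) * c (N - 1)%nat * hatD (N - 1)%nat q.
Hypothesis HRlin : forall (c1 c2 : vec) (x y : R) p q, (p < N)%nat -> (q < N)%nat ->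
     Rxx (fun r => x * c1 r + y * c2 r) p q = x * Rxx c1 p q + y * Rxx c2 p q.

Local Notation M := (Nat.pow N d).
Lemma HN0' : N <> 0%nat. Proof. lia. Qed.
Hint Resolve HN0' : core.
Lemma clt' l m : (coord N l m < N)%nat. Proof. apply coord_lt. lia. Qed.
Hint Resolve clt' : core.

Lemma Tlem j k c v u : (j < d)%nat -> (k < d)%nat ->
  rsum M (fun m => v m * Hdiag N d hw m * DDapp N d D Dxx j k c u m)
  = - rsum M (fun m => Hdiag N d hw m * c m * mv M (Dk N d D j) v m * mv M (Dk N d D k) u m)
    - indic (Nat.eqb j k) * rsum M (fun m => v m * mv M (Rii N d hw Rxx j c) u m)
    + Bj N d hw j v (fun m => c m * (if Nat.eqb j k then mv M (Dk N d hatD j) u m else mv M (Dk N d D k) u m)).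
Proof. intros Hj Hk. unfold DDapp, npts. destruct (Nat.eqb_spec j k).
  - subst k. rewrite (DiiSum N d hw D hatD Dxx Rxx HN2 Hhw HDxx) by auto. unfold indic. ring.
  - rewrite (SBPsum N d hw D HN2 HSBP) by auto. unfold indic.
    assert (rsum M (fun m => Hdiag N d hw m * mv M (Dk N d D j) v m * (c m * mv M (Dk N d D k) u m))
      = rsum M (fun m => Hdiag N d hw m * c m * mv M (Dk N d D j) v m * mv M (Dk N d D k) u m)).
    { apply rsum_ext. intros. ring. }
    rewrite H. ring.
Qed.

Lemma swap3 (x : vec) (f : nat -> nat -> nat -> nat -> R) :
  rsum M (fun m => x m * rsum d (fun i => rsum d (fun j => rsum d (fun k => f i j k m))))
  = rsum d (fun i => rsum d (fun j => rsum d (fun k => rsum M (fun m => x m * f i j k m)))).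
Proof.
  transitivity (rsum M (fun m => rsum d (fun i => rsum d (fun j => rsum d (fun k => x m * f i j k m))))).
  { apply rsum_ext. intros. rewrite <- rsum_scal. apply rsum_ext. intros. rewrite <- rsum_scal.
    apply rsum_ext. intros. rewrite <- rsum_scal. auto. }
  rewrite rsum_swap. apply rsum_ext. intros. rewrite rsum_swap. apply rsum_ext. intros.
  rewrite rsum_swap. auto.
Qed.

Lemma Rlin n (g : nat -> vec) p q : (p < N)%nat -> (q < N)%nat ->
  Rxx (fun r => rsum n (fun i => g i r)) p q = rsum n (fun i => Rxx (g i) p q).
Proof. intros Hp Hq. induction n; simpl.
  - pose proof (HRlin (fun _ => 0) (fun _ => 0) 0 0 p q Hp Hq). cbv beta in H.
    replace (fun r : nat => 0 * 0 + 0 * 0) with (fun _ : nat => 0) in H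
      by (apply functional_extensionality; intros; ring).
    rewrite H. ring.
  - rewrite <- IHn. pose proof (HRlin (fun r => rsum n (fun i => g i r)) (g n) 1 1 p q Hp Hq).
    cbv beta in H. rewrite !Rmult_1_l in H. rewrite <- H.
    f_equal. apply functional_extensionality. intros. ring.
Qed.


Hypothesis Hg : forall i side m, (i < d)%nat -> (m < Nat.pow N d)%nat ->
     onface N i side m = true -> 0 < gamma i side m.

Definition cc i j k : vec := fun p => alpha K J i j i k p * b p.

Lemma PartA u v :
  rsum d (fun i => rsum d (fun j => rsum d (fun k => rsum M (fun m =>
     Hdiag N d hw m * cc i j k m * mv M (Dk N d D j) v m * mv M (Dk N d D k) u m))))
  = rsum d (fun i => rsum M (fun m => Hdiag N d hw m * J m * b m * (Defs.Dx N d D K i u m * Defs.Dx N d D K i v m))).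
Proof. apply rsum_ext. intros i Hi.
  rewrite (rsum_ext d _ (fun j => rsum M (fun m => rsum d (fun k =>
     Hdiag N d hw m * cc i j k m * mv M (Dk N d D j) v m * mv M (Dk N d D k) u m)))).
  2:{ intros. apply rsum_swap. }
  rewrite rsum_swap. apply rsum_ext. intros m Hm.
  unfold Defs.Dx, npts. rewrite Rmult_comm with (r1 := rsum d _). rewrite rsum_mult.
  rewrite <- rsum_scal. apply rsum_ext. intros j Hj. rewrite <- rsum_scal. apply rsum_ext. intros k Hk.
  unfold cc, alpha. ring.
Qed.

Lemma PartR u v :
  rsum d (fun i => rsum d (fun j => rsum d (fun k => indic (Nat.eqb j k) *
     rsum M (fun m => v m * mv M (Rii N d hw Rxx j (cc i j k)) u m))))
  = rsum d (fun k => rsum M (fun m => v m * mv M (Rii N d hw Rxx k (eta d K J b k)) u m)).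
Proof.
  rewrite (rsum_ext d _ (fun i => rsum d (fun j => rsum M (fun m => v m * mv M (Rii N d hw Rxx j (cc i j j)) u m)))).
  2:{ intros i Hi. apply rsum_ext. intros j Hj.
      exact (rsum_indic' d j (fun k => rsum M (fun m => v m * mv M (Rii N d hw Rxx j (cc i j k)) u m)) Hj). }
  rewrite rsum_swap. apply rsum_ext. intros j Hj. rewrite rsum_swap. apply rsum_ext. intros m Hm.
  rewrite rsum_scal. f_equal. unfold mv. rewrite rsum_swap. apply rsum_ext. intros m' Hm'.
  rewrite rsum_scal_r. apply Rmult_eq_compat_r.
  rewrite (Rii_eq N d hw Rxx HN2 Hhw) by auto.
  rewrite (rsum_ext d _ (fun i => Hface N d hw j m * samel N d j m m' * Rxx (lineof N j (cc i j j) m) (coord N j m) (coord N j m'))).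
  2:{ intros. rewrite (Rii_eq N d hw Rxx HN2 Hhw) by auto. ring. }
  rewrite rsum_scal. rewrite <- Rlin by auto.
  replace (fun r => rsum d (fun i => lineof N j (cc i j j) m r)) with (lineof N j (eta d K J b j) m). ring.
  apply functional_extensionality. intros r. unfold lineof, cc, eta. rewrite rsum_scal_r. auto.
Qed.

Lemma Bj_sum j n v (f : nat -> vec) :
  rsum n (fun i => Bj N d hw j v (f i)) = Bj N d hw j v (fun m => rsum n (fun i => f i m)).
Proof. unfold Bj. rewrite rsum_swap. apply rsum_ext. intros. rewrite rsum_scal. auto. Qed.

Lemma mv_minus (X Y : mat) j u m :
  mv M (Dk N d (fun p q => X p q - Y p q) j) u m = mv M (Dk N d X j) u m - mv M (Dk N d Y j) u m.
Proof. unfold mv, Dk, kronI. rewrite <- rsum_minus. apply rsum_ext. intros. ring. Qed.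

Lemma gbDn j side m u : (j < d)%nat -> gamma j side m <> 0 ->
  gamma j side m * (b m * Dn N d D hatD K J gamma j side u m)
  = (if side then 1 else -1) * rsum d (fun i => rsum d (fun k => cc i j k m *
       (if Nat.eqb j k then mv M (Dk N d hatD j) u m else mv M (Dk N d D k) u m))).
Proof. intros Hj Hgam. unfold Dn, npts. set (sg := if side then 1 else -1).
  assert (nuE : forall j', nu j side j' = if Nat.eqb j' j then sg else 0).
  { intros. unfold nu, sg. destruct (Nat.eqb j' j); auto. }
  set (g := gamma j side m) in *.
  set (S1 := rsum d (fun l => rsum d (fun k => alpha K J l j l k m * mv M (Dk N d D k) u m))).
  set (S2 := rsum d (fun l => alpha K J l j l j m)).
  set (Dj := mv M (Dk N d D j) u m). set (hDj := mv M (Dk N d hatD j) u m).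
  assert (E1 : rsum d (fun l => rsum d (fun j' => rsum d (fun k => nu j side j' * (alpha K J l j' l k m / g) * mv M (Dk N d D k) u m)))
     = sg * / g * S1).
  { unfold S1. rewrite <- rsum_scal. apply rsum_ext. intros l Hl.
    transitivity (rsum d (fun j' => if Nat.eqb j' j then sg * / g * rsum d (fun k => alpha K J l j l k m * mv M (Dk N d D k) u m) else 0)).
    - apply rsum_ext. intros j' Hj'. rewrite nuE. destruct (Nat.eqb_spec j' j).
      + subst. rewrite <- rsum_scal. apply rsum_ext. intros. unfold Rdiv. ring.
      + apply rsum_zero. intros. ring.
    - apply (rsum_ifz d j (fun _ => sg * / g * rsum d (fun k => alpha K J l j l k m * mv M (Dk N d D k) u m))). auto. }
  assert (E2 : rsum d (fun k => nu j side k * (rsum d (fun l => alpha K J l k l k m) / g) * mv M (Dk N d (fun p q => D p q - hatD p q) k) u m)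
     = sg * / g * S2 * (Dj - hDj)).
  { transitivity (rsum d (fun k => if Nat.eqb k j then sg * / g * S2 * (Dj - hDj) else 0)).
    - apply rsum_ext. intros k Hk. rewrite nuE. destruct (Nat.eqb_spec k j).
      + subst. rewrite mv_minus. unfold Dj, hDj, S2, Rdiv. ring.
      + ring.
    - apply (rsum_ifz d j (fun _ => sg * / g * S2 * (Dj - hDj))). auto. }
  rewrite E1, E2.
  assert (E3 : rsum d (fun i => rsum d (fun k => cc i j k m *
       (if Nat.eqb j k then hDj else mv M (Dk N d D k) u m))) = b m * (S1 - S2 * (Dj - hDj))).
  { rewrite (rsum_ext d _ (fun i => rsum d (fun k => cc i j k m * mv M (Dk N d D k) u m) - cc i j j m * Dj + cc i j j m * hDj)).
    2:{ intros i Hi. transitivity (rsum d (fun k => if Nat.eqb j k then cc i j k m * hDj else cc i j k m * mv M (Dk N d D k) u m)).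
      apply rsum_ext. intros k Hk. destruct (Nat.eqb j k); auto.
      rewrite (rsum_if d j (fun k => cc i j k m * mv M (Dk N d D k) u m) (fun k => cc i j k m * hDj)) by auto. reflexivity. }
    rewrite rsum_plus, rsum_minus.
    assert (F1 : rsum d (fun i => rsum d (fun k => cc i j k m * mv M (Dk N d D k) u m)) = b m * S1).
    { unfold S1. rewrite <- rsum_scal. apply rsum_ext. intros. rewrite <- rsum_scal. apply rsum_ext. intros. unfold cc. ring. }
    assert (F2 : forall X, rsum d (fun i => cc i j j m * X) = b m * S2 * X).
    { intros X. unfold S2. rewrite <- rsum_scal. rewrite <- rsum_scal_r. apply rsum_ext. intros. unfold cc. ring. }
    rewrite F1, !F2. ring. }
  rewrite E3. field. auto.
Qed.


Definition Ytot j u : vec := fun m => rsum d (fun i => rsum d (fun k => cc i j k m *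
       (if Nat.eqb j k then mv M (Dk N d hatD j) u m else mv M (Dk N d D k) u m))).

Lemma side_eq j s m u : (j < d)%nat -> (m < M)%nat ->
  indic (onface N j s m) * (gamma j s m * (b m * Dn N d D hatD K J gamma j s u m))
  = indic (onface N j s m) * ((if s then 1 else -1) * Ytot j u m).
Proof. intros Hj Hm. destruct (onface N j s m) eqn:E.
  - rewrite gbDn; auto. apply Rgt_not_eq. apply Hg; auto.
  - unfold indic. ring.
Qed.

Lemma PartB u v :
  rsum d (fun i => rsum d (fun j => rsum d (fun k => Bj N d hw j v (fun m => cc i j k m *
       (if Nat.eqb j k then mv M (Dk N d hatD j) u m else mv M (Dk N d D k) u m)))))
  = ipGp N d hw gamma v (fun i side m => b m * Dn N d D hatD K J gamma i side u m).
Proof. rewrite rsum_swap. unfold ipGp, ipG. apply rsum_ext. intros j Hj.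
  rewrite (rsum_ext d _ (fun i => Bj N d hw j v (fun m => rsum d (fun k => cc i j k m *
       (if Nat.eqb j k then mv M (Dk N d hatD j) u m else mv M (Dk N d D k) u m))))).
  2:{ intros. apply Bj_sum. }
  rewrite Bj_sum. unfold Bj, npts. rewrite <- rsum_plus. apply rsum_ext. intros m Hm.
  transitivity (v m * Hface N d hw j m * (indic (onface N j false m) * (gamma j false m * (b m * Dn N d D hatD K J gamma j false u m)))
    + v m * Hface N d hw j m * (indic (onface N j true m) * (gamma j true m * (b m * Dn N d D hatD K J gamma j true u m)))).
  2:{ ring. }
  rewrite !side_eq by auto. unfold Ytot. ring.
Qed.

Lemma static u v :
  rsum M (fun m => v m * Hdiag N d hw m * schemeRHS N d D Dxx K J b u m)
  = - rsum d (fun i => rsum M (fun m => Hdiag N d hw m * J m * b m * (Defs.Dx N d D K i u m * Defs.Dx N d D K i v m)))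
    - rsum d (fun k => rsum M (fun m => v m * mv M (Rii N d hw Rxx k (eta d K J b k)) u m))
    + ipGp N d hw gamma v (fun i side m => b m * Dn N d D hatD K J gamma i side u m).
Proof.
  rewrite <- PartA, <- PartR, <- PartB.
  unfold schemeRHS. 
  rewrite (swap3 (fun m => v m * Hdiag N d hw m) (fun i j k m => DDapp N d D Dxx j k (fun p => alpha K J i j i k p * b p) u m)).
  rewrite <- rsum_opp, <- rsum_minus, <- rsum_plus. apply rsum_ext. intros i Hi.
  rewrite <- rsum_opp, <- rsum_minus, <- rsum_plus. apply rsum_ext. intros j Hj.
  rewrite <- rsum_opp, <- rsum_minus, <- rsum_plus. apply rsum_ext. intros k Hk.
  rewrite Tlem by auto. unfold cc. reflexivity.
Qed.

End Static.


Lemma dplus f g t l1 l2 : derivable_pt_lim f t l1 -> derivable_pt_lim g t l2 ->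
  derivable_pt_lim (fun x => f x + g x) t (l1 + l2).
Proof. intros. exact (derivable_pt_lim_plus f g t l1 l2 H H0). Qed.
Lemma dmult f g t l1 l2 : derivable_pt_lim f t l1 -> derivable_pt_lim g t l2 ->
  derivable_pt_lim (fun x => f x * g x) t (l1 * g t + f t * l2).
Proof. intros. exact (derivable_pt_lim_mult f g t l1 l2 H H0). Qed.
Lemma dscal c f t l : derivable_pt_lim f t l -> derivable_pt_lim (fun x => c * f x) t (c * l).
Proof. intros. exact (derivable_pt_lim_scal f c t l H). Qed.
Lemma dsum n (f : nat -> R -> R) (f' : nat -> R) t :
  (forall i, (i < n)%nat -> derivable_pt_lim (f i) t (f' i)) ->
  derivable_pt_lim (fun x => rsum n (fun i => f i x)) t (rsum n f').
Proof. induction n; intros H; simpl.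
  - exact (derivable_pt_lim_const 0 t).
  - apply dplus. apply IHn. intros; apply H; lia. apply H; lia. Qed.
Lemma dext f t l l' : derivable_pt_lim f t l -> l = l' -> derivable_pt_lim f t l'.
Proof. intros H E; subst; auto. Qed.

Lemma dlin n (cf : nat -> R) (u du : R -> vec) t :
  (forall m, (m < n)%nat -> derivable_pt_lim (fun t => u t m) t (du t m)) ->
  derivable_pt_lim (fun x => rsum n (fun m => cf m * u x m)) t (rsum n (fun m => cf m * du t m)).
Proof. intros H. apply (dsum n (fun m x => cf m * u x m)). intros. apply dscal. auto. Qed.

Section Main.
Variables (N d : nat) (hw : nat -> R) (D hatD : mat) (Dxx Rxx : vec -> mat)
  (K : nat -> nat -> vec) (J a b : vec) (gamma : nat -> bool -> vec).
Hypothesis HN2 : (2 <= N)%nat.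
Hypothesis Hhw : forall k, (k < N)%nat -> 0 < hw k.
Hypothesis HRsym : forall c : vec, (forall r, (r < N)%nat -> 0 <= c r) ->
     forall p q, (p < N)%nat -> (q < N)%nat -> Rxx c p q = Rxx c q p.
Hypothesis HRpsd : forall c : vec, (forall r, (r < N)%nat -> 0 <= c r) ->
     forall v : vec, 0 <= rsum N (fun p => rsum N (fun q => v p * Rxx c p q * v q)).
Hypothesis HJ : forall m, (m < Nat.pow N d)%nat -> 0 < J m.
Hypothesis Ha : forall m, (m < Nat.pow N d)%nat -> 0 < a m.
Hypothesis Hb : forall m, (m < Nat.pow N d)%nat -> 0 < b m.

Local Notation M := (Nat.pow N d).
Lemma HN0'' : N <> 0%nat. Proof. lia. Qed.
Hint Resolve HN0'' : core.
Lemma clt'' l m : (coord N l m < N)%nat. Proof. apply coord_lt. lia. Qed.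
Hint Resolve clt'' : core.

Lemma eta_nonneg k m : (m < M)%nat -> 0 <= eta d K J b k m.
Proof. intros Hm. unfold eta. apply Rmult_le_pos. apply rsum_nonneg. intros. unfold alpha.
  pose proof (HJ m Hm). nra. pose proof (Hb m Hm). lra. Qed.

Lemma lineof_eta_nonneg k m : (k < d)%nat -> (m < M)%nat -> forall r, (r < N)%nat -> 0 <= lineof N k (eta d K J b k) m r.
Proof. intros. unfold lineof. apply eta_nonneg. apply setcoord_lt; auto. Qed.

Lemma lineof_eq k (c : vec) m m' : (k < d)%nat -> (m < M)%nat -> (m' < M)%nat -> samel N d k m m' = 1 ->
  lineof N k c m = lineof N k c m'.
Proof. intros Hk Hm Hm' Hs. destruct (samel_cases N d k m m') as [[_ H]|[H _]]; [|lra].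
  apply functional_extensionality. intros r. unfold lineof. rewrite (setcoord_eq N d) with (m' := m'); auto. Qed.

Lemma Rii_sym k m m' : (k < d)%nat -> (m < M)%nat -> (m' < M)%nat ->
  Rii N d hw Rxx k (eta d K J b k) m m' = Rii N d hw Rxx k (eta d K J b k) m' m.
Proof. intros Hk Hm Hm'. rewrite !(Rii_eq N d hw Rxx HN2 Hhw) by auto. rewrite (samel_sym N d k m' m).
  destruct (samel_cases N d k m m') as [[H1 H2]|[H1 _]].
  - rewrite H1. rewrite (Hface_coords N d hw k m' m) by (intros; symmetry; auto).
    rewrite (lineof_eq k _ m' m) by (auto; rewrite samel_sym; auto).
    rewrite HRsym; auto. apply lineof_eta_nonneg; auto.
  - rewrite H1. ring.
Qed.

Lemma Rsum_sym k (x y : vec) : (k < d)%nat ->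
  rsum M (fun m => x m * rsum M (fun m' => Rii N d hw Rxx k (eta d K J b k) m m' * y m'))
  = rsum M (fun m => y m * rsum M (fun m' => Rii N d hw Rxx k (eta d K J b k) m m' * x m')).
Proof. intros Hk.
  transitivity (rsum M (fun m => rsum M (fun m' => x m * Rii N d hw Rxx k (eta d K J b k) m m' * y m'))).
  { apply rsum_ext. intros. rewrite <- rsum_scal. apply rsum_ext. intros. ring. }
  rewrite rsum_swap. apply rsum_ext. intros m Hm. rewrite <- rsum_scal. apply rsum_ext. intros m' Hm'.
  rewrite Rii_sym by auto. ring.
Qed.

Definition Ep (u ud : vec) : R :=
  / 2 * rsum M (fun m => Hdiag N d hw m * J m * a m * (ud m * ud m))
  + / 2 * rsum d (fun i => rsum M (fun m => Hdiag N d hw m * J m * b m * (Defs.Dx N d D K i u m * Defs.Dx N d D K i u m)))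
  + / 2 * rsum d (fun k => rsum M (fun m => u m * rsum M (fun m' => Rii N d hw Rxx k (eta d K J b k) m m' * u m'))).

Lemma energy_eq u ud : energy N d hw D Rxx K J a b u ud = Ep u ud.
Proof. unfold energy, Ep, ipOp, ipO, dot, npts. f_equal. f_equal.
  - f_equal. apply rsum_ext. intros m Hm. rewrite (mvH N d hw) by auto.
    pose proof (sqrt_sqrt (a m) ltac:(pose proof (Ha m Hm); lra)). 
    transitivity (Hdiag N d hw m * J m * (sqrt (a m) * sqrt (a m)) * (ud m * ud m)). ring. rewrite H. ring.
  - f_equal. apply rsum_ext. intros i Hi. apply rsum_ext. intros m Hm. rewrite (mvH N d hw) by auto.
    pose proof (sqrt_sqrt (b m) ltac:(pose proof (Hb m Hm); lra)).
    transitivity (Hdiag N d hw m * J m * (sqrt (b m) * sqrt (b m)) * (Defs.Dx N d D K i u m * Defs.Dx N d D K i u m)). ring.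
    rewrite H. ring.
Qed.

Lemma Rquad_nonneg k u : (k < d)%nat ->
  0 <= rsum M (fun m => u m * rsum M (fun m' => Rii N d hw Rxx k (eta d K J b k) m m' * u m')).
Proof. intros Hk. rewrite (group_sum N d HN0'' k) by auto. apply rsum_nonneg. intros m Hm.
  apply Rmult_le_pos. unfold indic; destruct (Nat.eqb _ _); lra.
  set (L := lineof N k (eta d K J b k) m). set (U := fun r => u (setcoord N k m r)).
  assert (E : rsum N (fun r => u (setcoord N k m r) * rsum M (fun m' => Rii N d hw Rxx k (eta d K J b k) (setcoord N k m r) m' * u m'))
    = Hface N d hw k m * rsum N (fun p => rsum N (fun q => U p * Rxx L p q * U q))).
  { rewrite <- rsum_scal. apply rsum_ext. intros r Hr.
    assert (Hsc : (setcoord N k m r < M)%nat) by (apply setcoord_lt; auto).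
    rewrite (rsum_ext M _ (fun m' => samel N d k m' m * (Hface N d hw k m * Rxx L r (coord N k m') * u m'))).
    - rewrite (linesum N d HN0'' k m) by auto. rewrite <- !rsum_scal. apply rsum_ext. intros q Hq.
      rewrite coord_set_same by auto. unfold U. ring.
    - intros m' Hm'. rewrite (Rii_eq N d hw Rxx HN2 Hhw) by auto.
      rewrite (Hface_set N d HN0'' hw k m r Hr). rewrite (samel_set N d HN0'' k m m' r Hr). rewrite (coord_set_same N k m r) by auto.
      rewrite (samel_sym N d k m m').
      assert (HL : lineof N k (eta d K J b k) (setcoord N k m r) = L).
      { unfold L. apply lineof_eq; auto. rewrite (samel_set N d HN0'' k m m r Hr). apply samel_all. auto. }
      rewrite HL. ring. }
  rewrite E. apply Rmult_le_pos. left. apply (Hface_pos N d hw HN2 Hhw).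
  apply HRpsd. intros. apply lineof_eta_nonneg; auto.
Qed.

Lemma energy_nonneg u ud : 0 <= energy N d hw D Rxx K J a b u ud.
Proof. rewrite energy_eq. unfold Ep.
  assert (0 <= rsum M (fun m => Hdiag N d hw m * J m * a m * (ud m * ud m))).
  { apply rsum_nonneg. intros m Hm. pose proof (Hdiag_pos N d hw HN2 Hhw m). pose proof (HJ m Hm).
    pose proof (Ha m Hm). apply Rmult_le_pos. left. repeat apply Rmult_lt_0_compat; auto. nra. }
  assert (0 <= rsum d (fun i => rsum M (fun m => Hdiag N d hw m * J m * b m * (Defs.Dx N d D K i u m * Defs.Dx N d D K i u m)))).
  { apply rsum_nonneg. intros. apply rsum_nonneg. intros m Hm. pose proof (Hdiag_pos N d hw HN2 Hhw m). pose proof (HJ m Hm).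
    pose proof (Hb m Hm). apply Rmult_le_pos. left. repeat apply Rmult_lt_0_compat; auto. nra. }
  assert (0 <= rsum d (fun k => rsum M (fun m => u m * rsum M (fun m' => Rii N d hw Rxx k (eta d K J b k) m m' * u m')))).
  { apply rsum_nonneg. intros. apply Rquad_nonneg. auto. }
  lra.
Qed.


Hypothesis HSBP : forall p q, (p < N)%nat -> (q < N)%nat ->
     hw p * D p q + D q p * hw q
     = - indic (Nat.eqb p 0 && Nat.eqb q 0)
       + indic (Nat.eqb p (N - 1) && Nat.eqb q (N - 1)).
Hypothesis HDxx : forall (c : vec) p q, (p < N)%nat -> (q < N)%nat ->
     hw p * Dxx c p q
     = - rsum N (fun r => D r p * hw r * c r * D r q)
       - Rxx c p q
       - indic (Nat.eqb p 0) * c 0%nat * hatD 0%nat q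
       + indic (Nat.eqb p (N - 1)) * c (N - 1)%nat * hatD (N - 1)%nat q.
Hypothesis HRlin : forall (c1 c2 : vec) (x y : R) p q, (p < N)%nat -> (q < N)%nat ->
     Rxx (fun r => x * c1 r + y * c2 r) p q = x * Rxx c1 p q + y * Rxx c2 p q.
Hypothesis Hg : forall i side m, (i < d)%nat -> (m < Nat.pow N d)%nat ->
     onface N i side m = true -> 0 < gamma i side m.

Lemma dDx (u du : R -> vec) i m t :
  (forall m, (m < M)%nat -> derivable_pt_lim (fun t => u t m) t (du t m)) ->
  derivable_pt_lim (fun x => Defs.Dx N d D K i (u x) m) t (Defs.Dx N d D K i (du t) m).
Proof. intros H. unfold Defs.Dx, mv, npts.
  apply (dsum d (fun j x => K i j m * rsum M (fun m' => Dk N d D j m m' * u x m'))).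
  intros j Hj. apply (dscal (K i j m) (fun x => rsum M (fun m' => Dk N d D j m m' * u x m'))).
  apply dlin. auto.
Qed.

Lemma deriv_general (u du ddu SAT : R -> vec) :
  (forall m t, (m < M)%nat -> derivable_pt_lim (fun t => u t m) t (du t m)) ->
  (forall m t, (m < M)%nat -> derivable_pt_lim (fun t => du t m) t (ddu t m)) ->
  (forall t m, (m < M)%nat -> J m * a m * ddu t m = schemeRHS N d D Dxx K J b (u t) m + SAT t m) ->
  forall t, derivable_pt_lim (fun t => energy N d hw D Rxx K J a b (u t) (du t)) t
       (ipGp N d hw gamma (du t) (fun i side m => b m * Dn N d D hatD K J gamma i side (u t) m)
        + dot M (du t) (mv M (Hmat N d hw) (SAT t))).
Proof. intros Hu Hdu Hs t.
  replace (fun t => energy N d hw D Rxx K J a b (u t) (du t)) with (fun t => Ep (u t) (du t))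
    by (apply functional_extensionality; intros; rewrite energy_eq; auto).
  unfold Ep. eapply dext.
  { apply dplus; [apply dplus|]; apply dscal.
    - apply (dsum M (fun m x => Hdiag N d hw m * J m * a m * (du x m * du x m))). intros m Hm.
      apply (dscal (Hdiag N d hw m * J m * a m) (fun x => du x m * du x m)). apply dmult; auto.
    - apply (dsum d (fun i x => rsum M (fun m => Hdiag N d hw m * J m * b m * (Defs.Dx N d D K i (u x) m * Defs.Dx N d D K i (u x) m)))).
      intros i Hi.
      apply (dsum M (fun m x => Hdiag N d hw m * J m * b m * (Defs.Dx N d D K i (u x) m * Defs.Dx N d D K i (u x) m))).
      intros m Hm.
      apply (dscal (Hdiag N d hw m * J m * b m) (fun x => Defs.Dx N d D K i (u x) m * Defs.Dx N d D K i (u x) m)).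
      apply dmult; apply dDx; intros; apply Hu; auto.
    - apply (dsum d (fun k x => rsum M (fun m => u x m * rsum M (fun m' => Rii N d hw Rxx k (eta d K J b k) m m' * u x m')))).
      intros k Hk.
      apply (dsum M (fun m x => u x m * rsum M (fun m' => Rii N d hw Rxx k (eta d K J b k) m m' * u x m'))).
      intros m Hm. apply dmult. auto. apply dlin. intros; apply Hu; auto. }
  cbv beta.
  assert (S1 : rsum M (fun m => Hdiag N d hw m * J m * a m * (ddu t m * du t m + du t m * ddu t m))
     = 2 * (rsum M (fun m => du t m * Hdiag N d hw m * schemeRHS N d D Dxx K J b (u t) m)
            + dot M (du t) (mv M (Hmat N d hw) (SAT t)))).
  { unfold dot. rewrite <- rsum_plus, <- rsum_scal. apply rsum_ext. intros m Hm.
    rewrite (mvH N d hw) by auto.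
    transitivity (2 * (du t m * Hdiag N d hw m * (J m * a m * ddu t m))). ring.
    rewrite Hs by auto. ring. }
  assert (S2 : rsum d (fun i => rsum M (fun m => Hdiag N d hw m * J m * b m *
       (Defs.Dx N d D K i (du t) m * Defs.Dx N d D K i (u t) m + Defs.Dx N d D K i (u t) m * Defs.Dx N d D K i (du t) m)))
     = 2 * rsum d (fun i => rsum M (fun m => Hdiag N d hw m * J m * b m * (Defs.Dx N d D K i (u t) m * Defs.Dx N d D K i (du t) m)))).
  { rewrite <- rsum_scal. apply rsum_ext. intros. rewrite <- rsum_scal. apply rsum_ext. intros. ring. }
  assert (S3 : rsum d (fun k => rsum M (fun m => du t m * rsum M (fun m' => Rii N d hw Rxx k (eta d K J b k) m m' * u t m')
        + u t m * rsum M (fun m' => Rii N d hw Rxx k (eta d K J b k) m m' * du t m')))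
     = 2 * rsum d (fun k => rsum M (fun m => du t m * mv M (Rii N d hw Rxx k (eta d K J b k)) (u t) m))).
  { rewrite <- rsum_scal. apply rsum_ext. intros k Hk. rewrite rsum_plus.
    rewrite (Rsum_sym k (u t) (du t)) by auto. unfold mv. ring. }
  rewrite S1, S2, S3.
  rewrite (static N d hw D hatD Dxx Rxx K J b gamma) by auto.
  field.
Qed.

Lemma neumann_zero u : forall ud : vec,
  ipGp N d hw gamma ud (fun i side m => b m * Dn N d D hatD K J gamma i side u m)
  + dot M ud (mv M (Hmat N d hw) (SATneu N d hw D hatD K J b gamma u)) = 0.
Proof. intros ud. unfold ipGp, ipG, dot, npts.
  rewrite (rsum_ext M _ (fun m => - rsum d (fun i =>
      indic (onface N i false m) * ud m * Hface N d hw i m * (gamma i false m * (b m * Dn N d D hatD K J gamma i false u m))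
    + indic (onface N i true m) * ud m * Hface N d hw i m * (gamma i true m * (b m * Dn N d D hatD K J gamma i true u m))))).
  - rewrite rsum_opp. rewrite (rsum_swap M d). 
    rewrite (rsum_ext d (fun i => rsum M _ + rsum M _) (fun i => rsum M (fun m =>
      indic (onface N i false m) * ud m * Hface N d hw i m * (gamma i false m * (b m * Dn N d D hatD K J gamma i false u m))
    + indic (onface N i true m) * ud m * Hface N d hw i m * (gamma i true m * (b m * Dn N d D hatD K J gamma i true u m))))).
    ring. intros. rewrite rsum_plus. auto.
  - intros m Hm. rewrite (mvH N d hw) by auto. unfold SATneu.
    pose proof (Hdiag_pos N d hw HN2 Hhw m).
    transitivity (ud m * (Hdiag N d hw m * - / Hdiag N d hw m) * rsum d (fun i =>
      indic (onface N i false m) * gamma i false m * Hface N d hw i m * b m * (Dn N d D hatD K J gamma i false u m - 0) +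
      indic (onface N i true m) * gamma i true m * Hface N d hw i m * b m * (Dn N d D hatD K J gamma i true u m - 0))). ring.
    replace (Hdiag N d hw m * - / Hdiag N d hw m) with (-1) by (field; lra).
    rewrite <- rsum_scal, <- rsum_opp. apply rsum_ext. intros. ring.
Qed.

End Main.

Theorem mainTheorem1
  (d N s : nat) (h : R) (w : nat -> R) (D hatD : mat) (Dxx Rxx : vec -> mat)
  (K : nat -> nat -> vec) (J a b : vec) (gamma : nat -> bool -> vec)
  (Hd : (1 <= d)%nat) (HN : (2 <= N)%nat) (Hh : h = / INR (N - 1))
  (Hs : (2 * s <= N)%nat) (Hw : forall k, (k < s)%nat -> 0 < w k)
  (* SBP property of D_xi *)
  (HSBP : forall p q, (p < N)%nat -> (q < N)%nat ->
     hweight N s h w p * D p q + D q p * hweight N s h w q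
     = - indic (Nat.eqb p 0 && Nat.eqb q 0)
       + indic (Nat.eqb p (N - 1) && Nat.eqb q (N - 1)))
  (* defining identity of D_xixi(c) *)
  (HDxx : forall (c : vec) p q, (p < N)%nat -> (q < N)%nat ->
     hweight N s h w p * Dxx c p q
     = - rsum N (fun r => D r p * hweight N s h w r * c r * D r q)
       - Rxx c p q
       - indic (Nat.eqb p 0) * c 0%nat * hatD 0%nat q
       + indic (Nat.eqb p (N - 1)) * c (N - 1)%nat * hatD (N - 1)%nat q)
  (* R_xixi(c) is linear in c *)
  (HRlin : forall (c1 c2 : vec) (x y : R) p q, (p < N)%nat -> (q < N)%nat ->
     Rxx (fun r => x * c1 r + y * c2 r) p q = x * Rxx c1 p q + y * Rxx c2 p q)
  (* ... and symmetric positive semidefinite when c >= 0 *)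
  (HRsym : forall c : vec, (forall r, (r < N)%nat -> 0 <= c r) ->
     forall p q, (p < N)%nat -> (q < N)%nat -> Rxx c p q = Rxx c q p)
  (HRpsd : forall c : vec, (forall r, (r < N)%nat -> 0 <= c r) ->
     forall v : vec, 0 <= rsum N (fun p => rsum N (fun q => v p * Rxx c p q * v q)))
  (* coefficients *)
  (HJ : forall m, (m < npts N d)%nat -> 0 < J m)
  (Ha : forall m, (m < npts N d)%nat -> 0 < a m)
  (Hb : forall m, (m < npts N d)%nat -> 0 < b m)
  (Hg : forall i side m, (i < d)%nat -> (m < npts N d)%nat ->
     onface N i side m = true -> 0 < gamma i side m) :
  let hw := hweight N s h w in
  let E := energy N d hw D Rxx K J a b in
  (* general identity for an arbitrary SAT *)
  (forall u du ddu SAT : R -> vec,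
     (forall m t, (m < npts N d)%nat -> derivable_pt_lim (fun t => u t m) t (du t m)) ->
     (forall m t, (m < npts N d)%nat -> derivable_pt_lim (fun t => du t m) t (ddu t m)) ->
     (forall m, (m < npts N d)%nat -> continuity (fun t => ddu t m)) ->
     (forall t m, (m < npts N d)%nat ->
        J m * a m * ddu t m = schemeRHS N d D Dxx K J b (u t) m + SAT t m) ->
     forall t, derivable_pt_lim (fun t => E (u t) (du t)) t
       (ipGp N d hw gamma (du t)
           (fun i side m => b m * Dn N d D hatD K J gamma i side (u t) m)
        + dot (npts N d) (du t) (mv (npts N d) (Hmat N d hw) (SAT t))))
  /\
  (* Neumann penalty: energy conservation *)
  (forall u du ddu : R -> vec,
     (forall m t, (m < npts N d)%nat -> derivable_pt_lim (fun t => u t m) t (du t m)) ->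
     (forall m t, (m < npts N d)%nat -> derivable_pt_lim (fun t => du t m) t (ddu t m)) ->
     (forall m, (m < npts N d)%nat -> continuity (fun t => ddu t m)) ->
     (forall t m, (m < npts N d)%nat ->
        J m * a m * ddu t m = schemeRHS N d D Dxx K J b (u t) m
                              + SATneu N d hw D hatD K J b gamma (u t) m) ->
     forall t, derivable_pt_lim (fun t => E (u t) (du t)) t 0)
  /\
  (* nonnegativity of the energy *)
  (forall u ud : vec, 0 <= E u ud).

Proof.
  intros hw E.
  assert (Hhw : forall k, (k < N)%nat -> 0 < hw k).
  { intros k Hk. unfold hw, hweight.
    assert (0 < h). { rewrite Hh. apply Rinv_0_lt_compat. apply lt_0_INR. lia. }
    apply Rmult_lt_0_compat; auto.
    destruct (Nat.ltb_spec k s). apply Hw; auto.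
    destruct (Nat.leb_spec (N - s) k). apply Hw; lia. lra. }
  unfold npts in *.
  split; [|split].
  - intros u du ddu SAT Hu Hdu Hc Hsch t. unfold E.
    eapply deriv_general; eauto.
  - intros u du ddu Hu Hdu Hc Hsch t. unfold E. eapply dext.
    eapply (deriv_general N d hw D hatD Dxx Rxx K J a b gamma) with (SAT := fun t => SATneu N d hw D hatD K J b gamma (u t)); eauto.
    apply neumann_zero; auto.
  - intros u ud. unfold E. apply energy_nonneg; auto.
Qed.
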